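(* Let $p$ be an odd prime, $q=p^m$ with $m>1$, and $S=S_\Lambda(q)$. Then $V=\Lambda(q)$ and $U[V,S]$ are the unique normal subgroups of $S$ of index $q$ which have exponent $p$. In particular, $U[V,S]$ is characteristic in $S$.
   Context: Let $\mathbb{K}=\mathbb{F}_q$; $V_p(q)$ is the $\mathbb{K}$-space of homogeneous polynomials of degree $p$ in $\mathbb{K}[x,y]$ with right $\mathrm{GL}_2(\mathbb{K})$-action $f\cdot\begin{pmatrix}a&b\\c&d\end{pmatrix}=f(ax+by,cx+dy)$; $\Lambda(q)=\mathrm{Hom}_{\mathbb{K}}(V_p(q),\mathbb{K})$ with $(w)(\eta g)=(wg^{-1})\eta$. $U=\{\begin{pmatrix}1&0\\c&1\end{pmatrix}:c\in\mathbb{K}\}$ and $S_\Lambda(q)=U\ltimes\Lambda(q)$, with $U$ and $V=\Lambda(q)$ identified as subgroups of $S$; $[V,S]$ is the commutator subgroup. *)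

(* Defs.v *)
From HB Require Import structures.
From mathcomp Require Import all_boot all_order all_algebra all_fingroup all_solvable all_field.
Set Implicit Arguments. Unset Strict Implicit. Unset Printing Implicit Defensive.
Import GRing.Theory.
Local Open Scope ring_scope.

(* Conventions:
   - K = F : finFieldType, p = n.
   - V_n(q) (homogeneous forms of degree n in K[x,y]) is identified with
     polynomials g in K[y] of degree <= n via dehomogenisation g(y)=f(1,y);
     the monomial x^(n-i) y^i corresponds to 'X^i.  Under this identification
     f |-> f.(1 0; c 1) = f(x, cx+y) becomes g |-> g \Po ('X + c%:P).
   - Lambda(q) = Hom(V_n(q),K) is represented by coordinate row vectors
     h : 'rV_(n+1) w.r.t. the dual monomial basis: eta_h(g) = sum_i g_i h_i.
   - The right action (eta u_c)(w) = (w u_c^{-1}) eta = eta(w u_{-c}), i.e.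
     (lam_act h c)_j = eta_h ( ('X - c%:P)^j ).
   - S = U |x Lambda has elements (c, h) ~ u_c * eta_h with
     (c1,h1)(c2,h2) = (c1+c2, h1.u_{c2} + h2). *)

Section SLambda.
Variables (F : finFieldType) (n : nat).

Definition lam_ev (h : 'rV[F]_n.+1) (g : {poly F}) : F :=
  \sum_(i < n.+1) g`_i * h 0 i.

Definition lam_act (h : 'rV[F]_n.+1) (c : F) : 'rV[F]_n.+1 :=
  \row_(j < n.+1) lam_ev h (('X - c%:P) ^+ j).

Lemma comp_XsubC_exp (a b : F) j :
  (('X - b%:P) ^+ j) \Po ('X - a%:P) = ('X - (a + b)%:P) ^+ j.
Proof.
elim: j => [|j IH]; first by rewrite !expr0 comp_polyC.
rewrite !exprS comp_polyM IH comp_polyB comp_polyX comp_polyC.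
by rewrite polyCD opprD addrA.
Qed.

Lemma lam_actA h a b : lam_act (lam_act h a) b = lam_act h (a + b).
Proof.
apply/rowP=> j; rewrite !mxE /lam_ev.
under eq_bigr => i _ do rewrite mxE big_distrr /=.
rewrite exchange_big /=; apply: eq_bigr => k _.
rewrite -comp_XsubC_exp coef_comp_poly size_exp_XsubC big_distrl /=.
have lej : (j.+1 <= n.+1)%N by exact: ltn_ord.
rewrite (big_ord_widen n.+1 (fun i => ((('X - b%:P) ^+ j)`_i * (('X - a%:P) ^+ i)`_k) * h 0 k) lej).
rewrite [RHS]big_mkcond /=; apply: eq_bigr => i _; rewrite mulrA.
case: ltnP => // Hi; rewrite nth_default ?size_exp_XsubC // !mul0r; by [].
Qed.

Lemma lam_act0 h : lam_act h 0 = h.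
Proof.
apply/rowP=> j; rewrite mxE /lam_ev subr0.
rewrite (bigD1 j) //= coefXn eqxx mul1r big1 ?addr0 // => i Hij.
have /negbTE E : (i : nat) != j by [].
by rewrite coefXn E mul0r.
Qed.

Lemma lam_actD h1 h2 c : lam_act (h1 + h2) c = lam_act h1 c + lam_act h2 c.
Proof.
apply/rowP=> j; rewrite !mxE /lam_ev -big_split /=.
by apply: eq_bigr => i _; rewrite mxE mulrDr.
Qed.

Lemma lam_actN h c : lam_act (- h) c = - lam_act h c.
Proof.
apply/rowP=> j; rewrite !mxE /lam_ev -sumrN /=.
by apply: eq_bigr => i _; rewrite mxE mulrN.
Qed.

Record SLam_type := SLam_of { slam_val : F * 'rV[F]_n.+1 }.
HB.instance Definition _ := [isNew for slam_val].
HB.instance Definition _ := [Finite of SLam_type by <:].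

Definition slam_mul (x y : SLam_type) : SLam_type :=
  SLam_of ((slam_val x).1 + (slam_val y).1,
           lam_act (slam_val x).2 (slam_val y).1 + (slam_val y).2).
Definition slam_one : SLam_type := SLam_of (0, 0).
Definition slam_inv (x : SLam_type) : SLam_type :=
  SLam_of (- (slam_val x).1, - lam_act (slam_val x).2 (- (slam_val x).1)).

Lemma slam_mulA : associative slam_mul.
Proof.
move=> [[a x]] [[b y]] [[c z]]; rewrite /slam_mul /=.
by rewrite addrA lam_actD lam_actA addrA.
Qed.

Lemma lam_act0h c : lam_act 0 c = 0.
Proof.
apply/rowP=> j; rewrite !mxE /lam_ev big1 // => i _; by rewrite mxE mulr0.
Qed.

Lemma slam_mul1 : left_id slam_one slam_mul.
Proof. by move=> [[a x]]; rewrite /slam_mul /= add0r lam_act0h add0r. Qed.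

Lemma slam_mulV : left_inverse slam_one slam_inv slam_mul.
Proof.
move=> [[a x]]; rewrite /slam_mul /slam_inv /= addNr lam_actN lam_actA addNr.
by rewrite lam_act0 addNr.
Qed.

HB.instance Definition _ :=
  Finite_isGroup.Build SLam_type slam_mulA slam_mul1 slam_mulV.

End SLambda.

Definition SLam (F : finFieldType) (n : nat) : {set SLam_type F n} := [set: SLam_type F n].

Definition ULam (F : finFieldType) (n : nat) : {set SLam_type F n} :=
  [set SLam_of (c, (0 : 'rV[F]_n.+1)) | c : F].

Definition VLam (F : finFieldType) (n : nat) : {set SLam_type F n} :=
  [set SLam_of ((0 : F), h) | h : 'rV[F]_n.+1].

(* Main.v *)
Require Import Defs.
From HB Require Import structures.
From mathcomp Require Import all_boot all_order all_algebra all_fingroup all_solvable all_field.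
From mathcomp Require Import zify ring.
Set Implicit Arguments. Unset Strict Implicit. Unset Printing Implicit Defensive.
Import GRing.Theory.

Section Work.
Variables (F : finFieldType) (p : nat).
Local Notation sT := (SLam_type F p).
Local Notation mk c h := (@SLam_of F p (c, h)).
Local Open Scope ring_scope.

Lemma mkE (x : sT) : x = mk (slam_val x).1 (slam_val x).2.
Proof. by case: x => [[]]. Qed.

Lemma mulE a b (x y : 'rV[F]_p.+1) : (mk a x * mk b y)%g = mk (a + b) (lam_act x b + y).
Proof. by []. Qed.

Lemma oneE : (1%g : sT) = mk 0 0.
Proof. by []. Qed.

Lemma invE c (h : 'rV[F]_p.+1) : ((mk c h)^-1)%g = mk (- c) (- lam_act h (- c)).
Proof. by []. Qed.

Lemma expE c (h : 'rV[F]_p.+1) k :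
  ((mk c h) ^+ k)%g = mk (k%:R * c) (\sum_(l < k) lam_act h (l%:R * c)).
Proof.
elim: k => [|k IH]. rewrite expg0 big_ord0 mul0r. reflexivity.
rewrite expgS IH mulE big_ord_recr /=; congr (mk _ _); last exact: addrC.
by rewrite mulrSr mulrDl mul1r addrC.
Qed.

Lemma lam_act00 (h : 'rV[F]_p.+1) c : lam_act h c 0 0 = h 0 0.
Proof.
rewrite mxE /lam_ev expr0 (bigD1 ord0) //= coef1 eqxx mul1r big1 ?addr0 //.
by move=> i; rewrite coef1 -val_eqE /= => /negbTE->; rewrite mul0r.
Qed.


Lemma coefXaddC_exp (c : F) j i : (('X + c%:P)^+j)`_i = c^+(j - i) *+ 'C(j,i).
Proof.
rewrite addrC exprDn coef_sum.
under eq_bigr => k _ do rewrite coefMn -rmorphXn coefCM coefXn.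
case: (ltnP i j.+1) => [ilt|jlt].
  rewrite (bigD1 (Ordinal ilt)) //= eqxx mulr1 big1 ?addr0 // => k /= Hk.
  have -> : (i == k) = false.
    by apply/negbTE; apply: contra Hk => /eqP Ei; apply/eqP/val_inj.
  by rewrite mulr0 mul0rn.
rewrite bin_small // mulr0n big1 // => k _.
have -> : (i == k) = false.
  by apply/negbTE; rewrite neq_ltn (leq_trans (ltn_ord k) jlt) orbT.
by rewrite mulr0 mul0rn.
Qed.

Lemma coefXsubC_exp (c : F) j i : (('X - c%:P)^+j)`_i = (-c)^+(j - i) *+ 'C(j,i).
Proof. by rewrite -polyCN coefXaddC_exp. Qed.


Section Char.
Hypothesis chF : p \in [pchar F].
Let hp : prime p := pcharf_prime chF.

Definition psum e : F := \sum_(l < p) (l%:R : F) ^+ e.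

Lemma natr_neq0 k : (0 < k < p)%N -> (k%:R : F) != 0.
Proof.
case/andP=> k0 kp; rewrite -(dvdn_pcharf chF).
by apply/negP => /dvdn_leq => /(_ k0); rewrite leqNgt kp.
Qed.

Lemma psum_small e : (e.+1 < p)%N -> psum e = 0.
Proof.
elim/ltn_ind: e => e IH ep.
have tele : \sum_(0 <= l < p) ((l.+1%:R : F) ^+ e.+1 - (l%:R : F) ^+ e.+1) = 0.
  by rewrite (telescope_sumr (fun l => (l%:R : F) ^+ e.+1)) // (pcharf0 chF) expr0n subrr.
rewrite big_mkord in tele.
have : \sum_(t < e.+1) psum t *+ 'C(e.+1, t) = 0.
  rewrite -[RHS]tele /psum.
  under eq_bigr => t _ do rewrite -sumrMnl.
  rewrite exchange_big /=; apply: eq_bigr => l _.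
  by rewrite mulrSr exprD1n [in RHS]big_ord_recr /= binn mulr1n addrK.
rewrite big_ord_recr /= big1 ?add0r => [|t _]; last first.
  by rewrite IH ?mul0rn //; apply: leq_ltn_trans ep; rewrite ltnS ltnW.
move=> /eqP; rewrite binSn -mulr_natr mulf_eq0 => /orP[/eqP //|].
by rewrite (negbTE (natr_neq0 _)) // ep.
Qed.

Lemma psum_last : psum p.-1 = (p.-1)%:R.
Proof.
have p1 : (0 < p.-1)%N by rewrite -ltnS prednK ?prime_gt1 ?prime_gt0.
rewrite /psum -(big_mkord xpredT (fun l => (l%:R : F) ^+ p.-1)) big_ltn ?prime_gt0 //.
rewrite expr0n eqn0Ngt p1 add0r.
rewrite (eq_big_nat _ _ (F2 := fun _ => 1)) ?sumr_const_nat ?subn1 // => l /andP[l0 lp].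
have /mulIf : (l%:R : F) != 0 by apply: natr_neq0; rewrite l0.
apply; rewrite mul1r -exprSr prednK ?prime_gt0 //.
by rewrite -(pFrobenius_autE chF) rmorph_nat.
Qed.

Definition Ecoef (c : F) (j i : nat) : F := (psum (j - i) * (-c) ^+ (j - i)) *+ 'C(j, i).

Lemma expp_entry c (h : 'rV[F]_p.+1) :
  ((mk c h) ^+ p)%g = mk 0 (\row_j \sum_(i < p.+1) Ecoef c j i * h 0 i).
Proof.
rewrite expE (pcharf0 chF) mul0r; congr (mk _ _); apply/rowP => j.
rewrite !mxE summxE.
under eq_bigr => l _ do rewrite mxE /lam_ev.
rewrite exchange_big /=; apply: eq_bigr => i _.
rewrite -mulr_suml /Ecoef; congr (_ * _).
under eq_bigr => l _ do rewrite coefXsubC_exp -mulrN exprMn.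
by rewrite sumrMnl -mulr_suml.
Qed.

Lemma Ecoef_zero c j i : (0 < i)%N || (c == 0) -> (i <= p)%N -> (j <= p)%N -> Ecoef c j i = 0.
Proof.
move=> H ip jp; rewrite /Ecoef.
have p1 := prime_gt1 hp.
case: (ltnP j i) => [ji|ij]; first by rewrite bin_small ?mulr0n.
case: (ltnP (j - i).+1 p) => [small|big]; first by rewrite psum_small ?mul0r ?mul0rn.
case/orP: H => [i0|/eqP c0].
  have [-> ->] : i = 1%N /\ j = p by lia.
  by rewrite bin1 mulrn_pchar.
rewrite c0 oppr0 expr0n.
case: eqP => [E|]; last by rewrite mulr0 mul0rn.
by move: big; rewrite E; case: p p1 => [|[|]].
Qed.

Lemma expp_one c (h : 'rV[F]_p.+1) : (c == 0) || (h 0 0 == 0) -> ((mk c h) ^+ p)%g = 1%g.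
Proof.
move=> H; rewrite expp_entry oneE; congr (mk _ _); apply/rowP => j; rewrite !mxE.
apply: big1 => i _.
case: (posnP i) => [i0|ipos].
  have -> : i = ord0 by apply: val_inj.
  case/orP: H => [c0|/eqP ->]; last by rewrite mulr0.
  by rewrite Ecoef_zero ?c0 ?orbT ?mul0r // -ltnS.
by rewrite Ecoef_zero ?ipos ?mul0r // -ltnS.
Qed.

Lemma expp_ne1 c (h : 'rV[F]_p.+1) : c != 0 -> h 0 0 != 0 -> ((mk c h) ^+ p)%g != 1%g.
Proof.
move=> c0 h0; rewrite expp_entry oneE; apply/negP => /eqP [] /rowP /(_ (inord p.-1)).
rewrite !mxE big_ord_recl big1 => [|i _]; last first.
  by rewrite Ecoef_zero ?mul0r //= ?inordK //; lia.
have p1 := prime_gt1 hp.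
rewrite addr0 inordK; last lia.
move=> /eqP; rewrite mulf_eq0 (negbTE h0) orbF.
rewrite /Ecoef subn0 bin0 mulr1n psum_last mulf_eq0 expf_eq0 oppr_eq0 (negbTE c0) andbF orbF.
by apply/negP; apply: natr_neq0; lia.
Qed.

End Char.




Definition pi1 (x : sT) : F := (slam_val x).1.
Definition pi0 (x : sT) : F := (slam_val x).2 0 0.

Lemma pi1M : forall x y, pi1 (x * y)%g = pi1 x + pi1 y.
Proof. by move=> [[a u]] [[b v]]. Qed.

Lemma pi0M : forall x y, pi0 (x * y)%g = pi0 x + pi0 y.
Proof. by move=> [[a u]] [[b v]]; rewrite /pi0 /= mxE lam_act00. Qed.

Section Hom.
Variable f : sT -> F.
Hypothesis fM : forall x y, f (x * y)%g = f x + f y.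

Lemma hom1 : f 1%g = 0.
Proof. have H := fM 1%g 1%g; rewrite mulg1 in H; by apply: (addrI (f 1%g)); rewrite addr0 -H. Qed.

Lemma homV x : f (x^-1)%g = - f x.
Proof. by apply/eqP; rewrite -subr_eq0 opprK -fM mulVg hom1. Qed.

Lemma homJ x y : f (x ^ y)%g = f x.
Proof. by rewrite /conjg !fM homV addrC addrK. Qed.

Lemma homR x y : f [~ x, y]%g = 0.
Proof. by rewrite /commg fM homV homJ addNr. Qed.

Definition kerf := [set x : sT | f x == 0].

Lemma kerf_group : group_set kerf.
Proof.
apply/group_setP; split; first by rewrite inE hom1.
by move=> x y; rewrite !inE fM => /eqP -> /eqP ->; rewrite addr0.
Qed.

Lemma kerf_norm : ([set: sT] \subset 'N(kerf))%g.
Proof.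
apply/normsP => x _; apply/eqP; rewrite eqEcard cardJg leqnn andbT.
apply/subsetP => z; rewrite mem_conjg !inE homJ.
done.
Qed.

Hypothesis fsurj : forall a, exists t, f t = a.

Lemma card_kerf : #|[set: sT]| = (#|F| * #|kerf|)%N.
Proof.
transitivity (\sum_(a : F) #|kerf|)%N; last by rewrite sum_nat_const.
rewrite cardsT -[in LHS]sum1_card (partition_big f xpredT) //=.
apply: eq_bigr => a _; rewrite sum1_card.
have [t ft] := fsurj a.
rewrite -(card_imset kerf (mulgI t)); apply: eq_card => x; rewrite [in LHS]unfold_in /=.
apply/eqP/imsetP => [fx|[y]]; last by rewrite inE => /eqP fy ->; rewrite fM ft fy addr0.
exists (t^-1 * x)%g; last by rewrite mulKVg.
by rewrite inE fM homV ft fx addNr.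
Qed.

End Hom.


Definition delta (i : nat) (a : F) : 'rV[F]_p.+1 := \row_(k < p.+1) (if (k == i :> nat) then a else 0).

Lemma Dentry c (i : nat) a (t : 'I_p.+1) : (i < p.+1)%N ->
  (lam_act (delta i a) c - delta i a) 0 t =
  if (t == i :> nat) then 0 else a * ((-c) ^+ (t - i) *+ 'C(t, i)).
Proof.
move=> ip; rewrite !mxE /lam_ev (bigD1 (Ordinal ip)) //= mxE eqxx big1 ?addr0; last first.
  move=> k /= Hk; rewrite mxE; case: eqP => [Eki|]; last by rewrite mulr0.
  by exfalso; move/eqP: Hk; apply; apply: val_inj.
rewrite coefXsubC_exp mulrC; case: eqP => [->|_]; last by rewrite subr0.
by rewrite subnn expr0 binn mulr1 subrr.
Qed.


Lemma VLamE : VLam F p = kerf pi1.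
Proof.
apply/setP => x; rewrite inE; apply/imsetP/eqP => [[h _ ->] // | x0].
by exists (slam_val x).2 => //; move: x0; rewrite /pi1; case: x => [[a u]] /= ->.
Qed.

Definition inK (w : 'rV[F]_p.+1) := mk 0 w \in [~: VLam F p, SLam F p]%g.

Lemma inK0 : inK 0.
Proof. by rewrite /inK -oneE group1. Qed.

Lemma inKD a b : inK a -> inK b -> inK (a + b).
Proof. by move=> Ha Hb; have := groupM Ha Hb; rewrite mulE lam_act0 addr0. Qed.

Lemma inKN a : inK a -> inK (- a).
Proof. by move=> Ha; have := groupVr Ha; rewrite invE oppr0 lam_act0. Qed.

Lemma inKB a b : inK a -> inK b -> inK (a - b).
Proof. by move=> Ha Hb; apply: inKD => //; apply: inKN. Qed.

Lemma inK_D c h : inK (lam_act h c - h).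
Proof.
have Hv : mk 0 h \in VLam F p by apply/imsetP; exists h.
have Hs : mk c 0 \in SLam F p by rewrite inE.
rewrite /inK; suff <- : [~ mk 0 h, mk c 0]%g = mk 0 (lam_act h c - h) by exact: mem_commg.
rewrite /commg /conjg !invE !mulE /= !oppr0 lam_act0h oppr0 !add0r !addr0 addNr.
by rewrite !lam_act0 lam_act0h add0r addrC.
Qed.


Section Main.
Hypothesis chF : p \in [pchar F].
Let hp : prime p := pcharf_prime chF.
Let p1 : (1 < p)%N := prime_gt1 hp.

Lemma inK_tail n : forall k, (p <= k + n)%N -> (2 <= k)%N ->
  forall w : 'rV[F]_p.+1, w 0 0 = 0 -> w 0 ord_max = 0 ->
  (forall t : 'I_p.+1, (t < k)%N -> w 0 t = 0) -> inK w.
Proof.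
elim: n => [|n IH] k pk k2 w w0 wp wk.
  have -> : w = 0; last exact: inK0.
  apply/rowP => t; rewrite mxE; case: (ltnP t k) => [tk|kt]; first by rewrite wk.
  have -> : t = ord_max by apply: val_inj => /=; have := ltn_ord t; lia.
  exact: wp.
case: (leqP p (k + n)) => [pkn|pkn]; first exact: (IH k).
set i := k.-1.
have ip : (i < p.+1)%N by rewrite /i; lia.
set a := w 0 (inord k) / k%:R.
set g := lam_act (delta i a) (-1) - delta i a.
have Hg : inK g := inK_D _ _.
have ge t : g 0 t = if (t == i :> nat) then 0 else a *+ 'C(t, i).
  by rewrite Dentry // opprK expr1n mulr_natr.
have sE t : (w - g) 0 t = w 0 t - g 0 t by rewrite [LHS]mxE [X in _ + X]mxE.
have -> : w = (w - g) + g by rewrite subrK.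
apply: inKD Hg; apply: (IH k.+1); rewrite ?addSnnS //; first lia.
- rewrite sE w0 ge /=; have -> : (0 == i) = false by apply/negbTE; rewrite /i; lia.
  rewrite bin0n; have -> : (i == 0%N) = false by apply/negbTE; rewrite /i; lia.
  by rewrite /= mulr0n subr0.
- rewrite sE wp ge /=; have -> : (p == i) = false by apply/negbTE; rewrite /i; lia.
  by rewrite -mulr_natr bin_lt_pcharf_0 ?mulr0 ?subr0 //; rewrite /i; lia.
move=> t tk; rewrite sE ge.
case: (ltnP t k) => [tk'|kt].
  rewrite wk // sub0r; case: eqP => [_|ti]; first by rewrite oppr0.
  by rewrite bin_small ?oppr0 //; rewrite /i; lia.
have tE : t = inord k by apply: val_inj; rewrite /= inordK; lia.
have -> : (t == i :> nat) = false by apply/negbTE; rewrite /i; lia.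
have -> : 'C(t, i) = k by rewrite tE inordK /i; [rewrite -{1}(prednK (ltnW k2)) binSn prednK //; lia | lia].
rewrite /a -mulr_natr divfK ?tE ?subrr //.
by apply: (natr_neq0 chF); lia.
Qed.

Variable d : F.
Hypothesis hd : d ^+ p != d.

Lemma inK_all (w : 'rV[F]_p.+1) : w 0 0 = 0 -> inK w.
Proof.
move=> w0.
set x1 := w 0 (inord 1); set y := w 0 ord_max.
set be := (y - x1) / (d ^+ p - d); set al := x1 - be * d.
set g1 := lam_act (delta 0 al) (-1) - delta 0 al.
set g2 := lam_act (delta 0 be) (- d) - delta 0 be.
have g1e t : g1 0 t = if (t == 0 :> nat) then 0 else al.
  by rewrite Dentry // opprK expr1n bin0 mulr1.
have g2e t : g2 0 t = if (t == 0 :> nat) then 0 else be * d ^+ t.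
  by rewrite Dentry // opprK bin0 mulr1n subn0.
have H1 : inK g1 := inK_D _ _.
have H2 : inK g2 := inK_D _ _.
have sE t : (w - g1 - g2) 0 t = w 0 t - g1 0 t - g2 0 t.
  by rewrite [LHS]mxE [(w - g1) 0 t]mxE [(- g2) 0 t]mxE [(- g1) 0 t]mxE.
have dd : d ^+ p - d != 0 by rewrite subr_eq0.
have -> : w = (w - g1 - g2) + g1 + g2 by rewrite addrAC !subrK.
apply: inKD H2; apply: inKD H1; apply: (inK_tail (n := p) (k := 2)) => //; first lia.
- by rewrite sE w0 g1e g2e /= !subr0.
- rewrite sE g1e g2e /=; have -> : (p == 0%N) = false by apply/negbTE; lia.
  rewrite -/y /al /be; move: dd; set D := d ^+ p; move=> dd. field. exact: dd.

move=> t; case: t => [[|[|t]] tp] //= _.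
  by rewrite sE (_ : Ordinal tp = 0) ?w0 ?g1e ?g2e /= ?subr0 //; apply: val_inj.
rewrite sE g1e g2e /= expr1.
have -> : w 0 (Ordinal tp) = x1 by rewrite /x1; congr (w 0 _); apply: val_inj; rewrite /= inordK.
by rewrite /al; ring.
Qed.

Hypothesis podd : odd p.
Let p2 : (2 < p)%N.
Proof. have : p != 2%N by apply: contraTneq podd => ->. lia. Qed.

Lemma surj1 a : exists t, pi1 t = a.
Proof. by exists (mk a 0). Qed.

Lemma surj0 a : exists t, pi0 t = a.
Proof. by exists (mk 0 (const_mx a)); rewrite /pi0 /= mxE. Qed.

Definition VG := Group (kerf_group pi1M).
Definition WG := Group (kerf_group pi0M).

Lemma cardVW : #|kerf pi0| = #|kerf pi1|.
Proof.
have Fpos : (0 < #|F|)%N by apply/card_gt0P; exists 0.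
apply/eqP; rewrite -(eqn_pmul2l Fpos) -card_kerf; [|exact: pi0M|exact: surj0].
by rewrite -card_kerf; [|exact: pi1M|exact: surj1].
Qed.

Lemma ULKE : (ULam F p * [~: VLam F p, SLam F p])%g = kerf pi0.
Proof.
apply/eqP; rewrite eqEsubset; apply/andP; split.
  apply: (@mul_subG _ WG).
    by apply/subsetP => x /imsetP [c _ ->]; rewrite inE /pi0 /= mxE.
  rewrite gen_subG; apply/subsetP => x /imset2P [a b _ _ ->].
  by rewrite inE (homR pi0M).
apply/subsetP => x; rewrite inE => /eqP x0.
have -> : x = (mk (slam_val x).1 0 * mk 0 (slam_val x).2)%g.
  by rewrite mulE lam_act0h add0r addr0; case: x {x0} => [[]].
apply: mem_mulg; first by apply/imsetP; exists (slam_val x).1.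
exact: inK_all.
Qed.

Lemma exp_kerf_gen f (z : sT) : (forall x, f x = 0 -> (x ^+ p)%g = 1%g) ->
  z \in kerf f -> z != 1%g -> exponent (kerf f) = p.
Proof.
move=> Hx zin z1.
have dv : (exponent (kerf f) %| p)%N.
  by apply/exponentP => x; rewrite inE => /eqP /Hx.
apply: (prime_nt_dvdP hp) dv; apply/eqP => e1.
by move: z1; have := expg_exponent zin; rewrite e1 expg1 => ->; rewrite eqxx.
Qed.

Lemma exp_V : exponent (kerf pi1) = p.
Proof.
apply: (@exp_kerf_gen pi1 (mk 0 (const_mx 1))).
- by move=> x x0; rewrite (mkE x) expp_one //; move: x0; rewrite /pi1 => ->; rewrite eqxx.
- by rewrite inE.
apply/eqP; rewrite oneE => -[] /rowP /(_ 0); rewrite !mxE => /eqP; by rewrite oner_eq0.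
Qed.

Lemma exp_W : exponent (kerf pi0) = p.
Proof.
apply: (@exp_kerf_gen pi0 (mk 1 0)).
- by move=> x x0; rewrite (mkE x) expp_one //; move: x0; rewrite /pi0 => ->; rewrite eqxx orbT.
- by rewrite inE /pi0 /= mxE.
by apply/eqP; rewrite oneE => -[] /eqP; rewrite oner_eq0.
Qed.

Lemma cardS : #|[set: sT]| = (#|F| * #|kerf pi1|)%N.
Proof. by apply: card_kerf; [exact: pi1M|exact: surj1]. Qed.

Lemma idx_card (N : {group sT}) : (#|SLam F p : N|%g = #|F|) <-> #|N| = #|kerf pi1|.
Proof.
have L := Lagrange (subsetT N); rewrite cardS in L.
have Vpos : (0 < #|kerf pi1|)%N by exact: (cardG_gt0 VG).
have Fpos : (0 < #|F|)%N by apply/card_gt0P; exists 0.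
rewrite /SLam; split => [Hi|Hc].
  by move: L; rewrite Hi mulnC => /eqP; rewrite eqn_pmul2l // => /eqP.
by move: L; rewrite Hc mulnC => /eqP; rewrite eqn_pmul2r // => /eqP.
Qed.

Lemma normal_kerf f (fM : forall x y, f (x * y)%g = f x + f y) : (kerf f <| SLam F p)%g.
Proof. by rewrite /normal /SLam subsetT kerf_norm. Qed.

Lemma part1 (N : {group sT}) :
  [/\ (N <| SLam F p)%g, #|SLam F p : N|%g = #|F| & exponent N = p] <->
  (N :=: VLam F p \/ N :=: ULam F p * [~: VLam F p, SLam F p])%g.
Proof.
rewrite ULKE VLamE; split.
  case=> nN /idx_card cN eN.
  have ordp z : z \in N -> (z ^+ p)%g = 1%g by move=> zN; have := expg_exponent zN; rewrite eN.
  have key z : z \in N -> pi1 z != 0 -> pi0 z = 0.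
    move=> zN z1; apply/eqP; apply: contraTT (introT eqP (ordp z zN)) => z0.
    by rewrite (mkE z) expp_ne1 //.
  case: (boolP (N \subset kerf pi1)) => [sNV|/subsetPn [x xN x1]].
    by left; apply/eqP; rewrite eqEcard sNV cN leqnn.
  right; apply/eqP; rewrite eqEcard cardVW cN leqnn andbT.
  apply/subsetP => y yN; rewrite inE; apply/eqP.
  rewrite inE in x1.
  case: (eqVneq (pi1 y) 0) => [y1|y1]; last exact: key.
  have := key _ (groupM xN yN); rewrite pi1M y1 addr0 pi0M key // add0r.
  by apply.
case=> ->; split.
- exact: normal_kerf pi1M.
- exact: (proj2 (idx_card VG)).
- exact: exp_V.
- exact: normal_kerf pi0M.
- by apply: (proj2 (idx_card WG)); rewrite /= cardVW.
- exact: exp_W.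
Qed.

Lemma V_ab : abelian (kerf pi1).
Proof.
apply/centsP => x; rewrite inE => /eqP x0 y; rewrite inE => /eqP y0.
move: x0 y0; rewrite /commute /pi1; case: x => [[a u]]; case: y => [[b v]] /= -> ->.
by rewrite !mulE !lam_act0 addrC [v + u]addrC.
Qed.

Lemma W_nonab : ~~ abelian (kerf pi0).
Proof.
apply/negP => /centsP H.
have xin : mk (-1) 0 \in kerf pi0 by rewrite inE /pi0 /= mxE.
have yin : mk 0 (delta 1 1) \in kerf pi0 by rewrite inE /pi0 /= mxE.
have := H _ xin _ yin; rewrite /commute !mulE lam_act0h add0r addr0 => -[].
rewrite addr0 => _ /rowP /(_ (inord 2)) E.
have := @Dentry (-1) 1 1 (inord 2) (ltnW p1).
rewrite [LHS]mxE [X in _ + X]mxE -E subrr inordK; last lia.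
rewrite /= opprK expr1n bin1 mul1r => /eqP; rewrite eq_sym.
by apply/negP; apply: (natr_neq0 chF); lia.
Qed.

Lemma part2 : (ULam F p * [~: VLam F p, SLam F p] \char SLam F p)%g.
Proof.
rewrite ULKE; apply/(@charP _ WG [set: sT]%G); split; first exact: subsetT.
move=> f injf fS.
have sW : (kerf pi0 \subset SLam F p)%g by exact: subsetT.
have H : [/\ (f @* WG <| SLam F p)%g, #|SLam F p : f @* WG|%g = #|F| & exponent (f @* WG)%g = p].
  split.
  - by have := morphim_normal f (normal_kerf pi0M); rewrite fS.
  - by apply: (proj2 (idx_card (f @* WG)%G)); rewrite /= card_injm // cardVW.
  - by rewrite exponent_injm // exp_W.
case/(part1 (f @* WG)%G): H => MV; last by rewrite /= MV ULKE.
rewrite VLamE in MV.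
by have := injm_abelian injf sW; rewrite /= MV V_ab (negbTE W_nonab).
Qed.

End Main.

End Work.

Local Open Scope ring_scope.
Lemma exists_nonfixed (F : finFieldType) p m :
  prime p -> (1 < m)%N -> #|F| = (p ^ m)%N -> exists d : F, d ^+ p != d.
Proof.
move=> hp m1 cF.
case: (boolP [exists d : F, d ^+ p != d]) => [/existsP //|/existsPn H].
exfalso.
have p1 := prime_gt1 hp.
pose P : {poly F} := 'X^p - 'X.
have sP : size P = p.+1.
  by rewrite size_polyDl ?size_polyXn // size_polyN size_polyX ltnS.
have P0 : P != 0 by rewrite -size_poly_gt0 sP.
have := max_poly_roots P0 _ (enum_uniq F).
rewrite -cardE sP cF.
have pm : (p ^ 2 <= p ^ m)%N by rewrite leq_pexp2l // prime_gt0.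
have : (p.+1 <= p ^ m)%N by apply: leq_trans pm; rewrite expnS expn1; nia.
move=> le H2; suff Hr : all (root P) (enum F) by have := leq_trans le (H2 Hr); rewrite ltnn.
apply/allP => x _; rewrite /root /P !hornerE subr_eq0.
by have := H x; rewrite negbK.
Qed.
Local Close Scope ring_scope.

Theorem lemma2p17 (p m : nat) (F : finFieldType) :
  prime p -> odd p -> (1 < m)%N -> #|F| = (p ^ m)%N ->
  (forall N : {group SLam_type F p},
      [/\ (N <| SLam F p)%g, (#|SLam F p : N|)%g = (p ^ m)%N & exponent N = p]
      <-> ((N :=: VLam F p)%g \/ (N :=: ULam F p * [~: VLam F p, SLam F p])%g))
  /\ (ULam F p * [~: VLam F p, SLam F p] \char SLam F p)%g.
Proof.
move=> hp podd m1 cF.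
have chF := card_finPcharP cF hp.
have [d hd] := exists_nonfixed hp m1 cF.
split; last exact: (part2 chF hd podd).
by move=> N; rewrite -cF; exact: (part1 chF hd N).
Qed.
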